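(* In the augmented graph setting of the context, suppose $\sigma,\kappa$ satisfy $\sigma\ge\sigma_i$ and $\kappa\ge\kappa_i$ for all $i$, and that for every virtual edge between center node $i$ and virtual node $(i,j)$ the weight satisfies $\mu_{ij}^2=\frac{\lambda_{\min}^+(L)}{\sigma\kappa_i}L_{i,j}$. Then $$\lambda_{\min}^+(\tilde L)\ge\frac{\lambda_{\min}^+(L)}{2\sigma\kappa},\qquad \tilde L=\Sigma^{-1/2}AA^T\Sigma^{-1/2}.$$
   Context: $G$ is a connected undirected graph on $n$ nodes with edge set $E^{\rm comm}$ of size $E$. For each $i$, $\sigma_i>0$ and $L_{i,j}>0$ ($j=1,\dots,m$), and $\kappa_i=1+\sigma_i^{-1}\sum_{j=1}^mL_{i,j}$. The augmented graph has $n(1+m)$ nodes (center nodes $i$ and virtual nodes $(i,j)$) and edges: those of $G$ plus the virtual edges $i$–$(i,j)$, each with a fixed orientation. With weights $\mu_{k\ell}>0$ (arbitrary on edges of $G$), $A\in\mathbb{R}^{n(1+m)\times(E+nm)}$ is defined by $Ae_{k\ell}=\mu_{k\ell}(e^{(k)}-e^{(\ell)})$, and $L=A_{\rm comm}A_{\rm comm}^T\in\mathbb{R}^{n\times n}$ where $A_{\rm comm}e_{k\ell}=\mu_{k\ell}(e^{(k)}-e^{(\ell)})$ for $(k,\ell)\in E^{\rm comm}$ (the weighted Laplacian of $G$). $\Sigma$ is the diagonal matrix with $\sigma_i$ at center node $i$ and $L_{i,j}$ at virtual node $(i,j)$. $\lambda_{\min}^+$ denotes the smallest nonzero eigenvalue.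 *)

(* Defs.v *)
From HB Require Import structures.
From mathcomp Require Import all_boot all_order all_algebra.
From mathcomp Require Import polyrcf.
Set Implicit Arguments. Unset Strict Implicit. Unset Printing Implicit Defensive.
Import Order.TTheory GRing.Theory Num.Theory.
Local Open Scope ring_scope.

Section Defs.
Variable R : rcfType.

(* The (real) eigenvalues of a square matrix M are the real roots of its
   characteristic polynomial (mxpoly: eigenvalue_root_char);
   rootsR lists them (sorted, without repetition). *)
Definition nonzero_eigs k (M : 'M[R]_k) : seq R :=
  [seq x <- rootsR (char_poly M) | x != 0].

(* lambda_min^+ : smallest nonzero eigenvalue (0 if there is none). *)
Definition lmin_pos k (M : 'M[R]_k) : R :=
  if nonzero_eigs M is x :: s then foldr Num.min x s else 0.

Definition adj n E (src dst : 'I_E -> 'I_n) : rel 'I_n :=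
  fun k l => [exists e, ((src e == k) && (dst e == l)) || ((src e == l) && (dst e == k))].

Definition simple_graph n E (src dst : 'I_E -> 'I_n) : Prop :=
  (forall e, src e != dst e) /\
  (forall e f, e != f ->
     ~ ((src e == src f) && (dst e == dst f) || (src e == dst f) && (dst e == src f))).

Definition connected_graph n E (src dst : 'I_E -> 'I_n) : Prop :=
  forall k l, connect (adj src dst) k l.

Definition Acomm n E (src dst : 'I_E -> 'I_n) (mu : 'I_E -> R) : 'M[R]_(n, E) :=
  \sum_(e < E) mu e *: (delta_mx (src e) e - delta_mx (dst e) e).

Definition Lap n E src dst mu : 'M[R]_n :=
  let A := @Acomm n E src dst mu in A *m A^T.

(* Augmented graph: nodes 'I_(n + n*m); center node i is lshift _ i,
   virtual node (i,j) is rshift n (mxvec_index i j).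
   Edges 'I_(E + n*m); edge e of G is lshift _ e, virtual edge i--(i,j)
   is rshift E (mxvec_index i j). *)
Definition ctr n m (i : 'I_n) : 'I_(n + n * m) := lshift (n * m) i.
Definition vrt n m (i : 'I_n) (j : 'I_m) : 'I_(n + n * m) := rshift n (mxvec_index i j).
Definition cedge E n m (e : 'I_E) : 'I_(E + n * m) := lshift (n * m) e.
Definition vedge E n m (i : 'I_n) (j : 'I_m) : 'I_(E + n * m) := rshift E (mxvec_index i j).

(* orient i j = true : virtual edge oriented i -> (i,j); false : (i,j) -> i.
   Column for edge (k,l): mu_{kl} (e^(k) - e^(l)). *)
Definition Aaug n m E (src dst : 'I_E -> 'I_n) (mu : 'I_E -> R)
    (muv : 'I_n -> 'I_m -> R) (orient : 'I_n -> 'I_m -> bool)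
    : 'M[R]_(n + n * m, E + n * m) :=
  \sum_(e < E) mu e *:
     (delta_mx (ctr m (src e)) (cedge n m e) - delta_mx (ctr m (dst e)) (cedge n m e))
  + \sum_(i < n) \sum_(j < m) (muv i j * (if orient i j then 1 else -1 : R)) *:
     (delta_mx (ctr m i) (vedge E i j) - delta_mx (vrt i j) (vedge E i j)).

Definition sigdiag n m (sig : 'I_n -> R) (Lij : 'I_n -> 'I_m -> R) : 'rV[R]_(n + n * m) :=
  row_mx (\row_i sig i) (mxvec (\matrix_(i, j) Lij i j)).

Definition Sig_isqrt n m sig Lij : 'M[R]_(n + n * m) :=
  diag_mx (map_mx (fun x => (Num.sqrt x)^-1) (@sigdiag n m sig Lij)).

Definition kappa n m (sig : 'I_n -> R) (Lij : 'I_n -> 'I_m -> R) (i : 'I_n) : R :=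
  1 + (sig i)^-1 * \sum_(j < m) Lij i j.

Definition Ltilde n m E src dst mu muv orient sig Lij : 'M[R]_(n + n * m) :=
  let S := @Sig_isqrt n m sig Lij in
  let A := @Aaug n m E src dst mu muv orient in
  S *m (A *m A^T) *m S.

End Defs.

(* Main.v *)
Require Import Defs.
From HB Require Import structures.
From mathcomp Require Import all_boot all_order all_algebra.
From mathcomp Require Import polyrcf complex sesquilinear spectral.
From mathcomp Require Import ring lra.
Import Order.TTheory GRing.Theory Num.Theory.
Set Implicit Arguments. Unset Strict Implicit. Unset Printing Implicit Defensive.
Local Open Scope ring_scope.
Section Spec.
Variable R : rcfType.
Local Open Scope sesquilinear_scope.
Local Notation toC := (real_complex R).

Lemma toC_conj (r : R) : Num.conj (toC r) = toC r.
Proof. exact: conjc_real. Qed.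

Lemma spec_quad k (N : 'M[R]_k) (x : 'rV[R]_k) : N^T = N ->
  exists d z : 'I_k -> R, (forall i, root (char_poly N) (d i)) /\ (forall i, 0 <= z i)
   /\ \sum_i z i = (x *m x^T) 0 0 /\ (x *m N *m x^T) 0 0 = \sum_i d i * z i.
Proof.
move=> NT.
pose Nc := map_mx toC N.
have Nh : Nc \is hermsymmx.
  apply/is_hermitianmxP; rewrite expr0 scale1r.
  apply/matrixP => i j; rewrite !mxE toC_conj -[in RHS]NT mxE //.
have /orthomx_spectralP HN := hermitian_normalmx Nh.
set P := spectralmx Nc in HN; set d := spectral_diag Nc in HN.
have Pu : P \is unitarymx by exact: spectral_unitarymx.
have PPt : P *m P^t* = 1%:M by apply/unitarymxP.
have PtP : P^t* *m P = 1%:M by apply: mulmx1C.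
have HNt : Nc = P^t* *m diag_mx d *m P by rewrite HN invmx_unitary.
have dreal : d \is a mxOver Num.real by exact: hermitian_spectral_diag_real.
pose dR i := complex.Re (d 0 i).
have dRE i : toC (dR i) = d 0 i by rewrite RRe_real //; apply: (mxOverP dreal).
have root_d i : root (char_poly N) (dR i).
  rewrite -(fmorph_root toC) map_char_poly -/Nc.
  rewrite [X in root _ X](_ : _ = d 0 i); last exact: dRE.
  rewrite -eigenvalue_root_char.
  apply/eigenvalueP; exists (row i P).
    rewrite -row_mul HNt !mulmxA PPt mul1mx mul_diag_mx.
    by apply/rowP => j; rewrite !mxE.
  apply/eqP => /(congr1 (fun M => (M *m P^t*) 0 i)).
  by rewrite -row_mul PPt mul0mx !mxE eqxx /= => /eqP; rewrite oner_eq0.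
pose xc := map_mx toC x.
have xct : xc^t* = map_mx toC x^T.
  by apply/matrixP => a b; rewrite !mxE toC_conj.
pose u := xc *m P^t*.
have ut : u^t* = P *m xc^t*.
  by rewrite /u trmx_mul map_mxM trmxCK.
have uu i : 0 <= u 0 i * Num.conj (u 0 i) by exact: mulcJ_ge0.
pose z i := complex.Re (u 0 i * Num.conj (u 0 i)).
have zE i : toC (z i) = u 0 i * Num.conj (u 0 i).
  by rewrite RRe_real // ger0_real.
exists dR, z; split => //; split.
  by move=> i; rewrite -ler0c zE.
split.
  apply: complexI; rewrite rmorph_sum /=.
  have -> : toC ((x *m x^T) 0 0) = (xc *m xc^t*) 0 0.
    by rewrite xct -map_mxM [in RHS]mxE.
  rewrite -{1}[xc]mulmx1 -PtP mulmxA -/u -mulmxA -ut mxE.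
  by apply: eq_bigr => i _; apply: (etrans (zE i)); rewrite !mxE.
apply: complexI; rewrite rmorph_sum /=.
have -> : toC ((x *m N *m x^T) 0 0) = (xc *m Nc *m xc^t*) 0 0.
  by rewrite xct -!map_mxM [in RHS]mxE.
rewrite HNt !mulmxA -/u -mulmxA -ut mul_mx_diag mxE.
apply: eq_bigr => i _; rewrite rmorphM /=. apply: etrans _ (congr1 _ (esym (zE i))). rewrite (_ : toC (dR i) = d 0 i); last exact: dRE. by rewrite !mxE; set a := \sum_j _; rewrite mulrAC mulrC.
Qed.
End Spec.
Section Lmin.
Variable R : rcfType.

Lemma in_nz_eigs k (M : 'M[R]_k) x :
  (x \in nonzero_eigs M) = (x != 0) && root (char_poly M) x.
Proof.
rewrite /nonzero_eigs mem_filter; congr (_ && _).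
have nz : char_poly M != 0 by rewrite monic_neq0 // char_poly_monic.
apply/idP/idP; first exact: (roots_on_root (roots_on_rootsR nz)).
by move=> r; apply: (root_roots_on (roots_on_rootsR nz)).
Qed.

Lemma foldr_min_le (x : R) s y : y \in x :: s -> foldr Num.min x s <= y.
Proof.
elim: s => [|a s IH] /=; first by rewrite inE => /eqP ->.
rewrite !inE => /orP [yx|/orP [ya|ys]]; rewrite ge_min; apply/orP.
- by right; apply: IH; rewrite inE yx.
- by left; rewrite (eqP ya).
- by right; apply: IH; rewrite inE ys orbT.
Qed.

Lemma foldr_min_ge (c x : R) s : (forall y, y \in x :: s -> c <= y) ->
  c <= foldr Num.min x s.
Proof.
elim: s => [|a s IH] /= H; first by apply: H; rewrite mem_head.
rewrite le_min H ?inE ?eqxx ?orbT //= IH // => y; rewrite inE => /orP [/eqP->|ys].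
  by apply: H; rewrite mem_head.
by apply: H; rewrite !inE ys !orbT.
Qed.

Lemma lmin_le k (M : 'M[R]_k) x : x \in nonzero_eigs M -> lmin_pos M <= x.
Proof. rewrite /lmin_pos; case: (nonzero_eigs M) => // a s; exact: foldr_min_le. Qed.

Lemma lmin_ge k (M : 'M[R]_k) c : (forall x, x \in nonzero_eigs M -> c <= x) ->
  nonzero_eigs M != [::] -> c <= lmin_pos M.
Proof. rewrite /lmin_pos; case: (nonzero_eigs M) => // a s H _; exact: foldr_min_ge. Qed.

Lemma lmin_ge0 k (M : 'M[R]_k) : (forall x, x \in nonzero_eigs M -> 0 <= x) ->
  0 <= lmin_pos M.
Proof.
move=> H; rewrite /lmin_pos; move: H; case: (nonzero_eigs M) => // a s H.
exact: foldr_min_ge.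
Qed.

Lemma lmin_nil k (M : 'M[R]_k) : nonzero_eigs M = [::] -> lmin_pos M = 0.
Proof. by rewrite /lmin_pos => ->. Qed.

Lemma eig_vec k (M : 'M[R]_k) a : root (char_poly M) a ->
  exists2 v : 'rV_k, v *m M = a *: v & v != 0.
Proof. by rewrite -eigenvalue_root_char => /eigenvalueP. Qed.

End Lmin.
Section Mx.
Variable R : rcfType.

Lemma sum_ord_const k (c : R) : \sum_(i < k) c = k%:R * c.
Proof. by rewrite -(big_mkord xpredT (fun _ => c)) sumr_const_nat subn0 mulr_natl. Qed.

Lemma rowmul_delta p q (w : 'rV[R]_p) (a : 'I_p) (c : 'I_q) :
  w *m delta_mx a c = w 0 a *: delta_mx 0 c.
Proof.
apply/rowP => k; rewrite !mxE (bigD1 a) //= big1 ?addr0.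
  by rewrite !mxE !eqxx.
by move=> i ia; rewrite !mxE (negPf ia) mulr0.
Qed.

Lemma tm p q (w : 'rV[R]_p) (a : R) (x y : 'I_p) (c k : 'I_q) :
  (w *m (a *: (delta_mx x c - delta_mx y c))) 0 k
  = (c == k)%:R * (a * (w 0 x - w 0 y)).
Proof.
rewrite -scalemxAr mulmxBr !rowmul_delta !mxE !eqxx /=.
by rewrite eq_sym; ring.
Qed.

Lemma quad_row p (z : 'rV[R]_p) : (z *m z^T) 0 0 = \sum_k z 0 k ^+ 2.
Proof. by rewrite mxE; apply: eq_bigr => k _; rewrite mxE expr2. Qed.

Lemma sum_mxvec n m (F : 'I_(n * m) -> R) :
  \sum_k F k = \sum_i \sum_j F (mxvec_index i j).
Proof.
rewrite (reindex _ (curry_mxvec_bij _ _)) /= pair_bigA.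
by apply: eq_bigr => [[i j]].
Qed.

Lemma eq_mxvec_index n m (i i' : 'I_n) (j j' : 'I_m) :
  (mxvec_index i j == mxvec_index i' j') = (i == i') && (j == j').
Proof.
apply/eqP/andP => [/cast_ord_inj/enum_rank_inj [-> ->] //|[/eqP -> /eqP ->] //].
Qed.

Lemma Acomm_entry n E (src dst : 'I_E -> 'I_n) (mu : 'I_E -> R) (x : 'rV[R]_n) e :
  (x *m Acomm src dst mu) 0 e = mu e * (x 0 (src e) - x 0 (dst e)).
Proof.
rewrite /Acomm mulmx_sumr summxE (bigD1 e) //= big1 ?addr0.
  by rewrite tm eqxx mul1r.
by move=> f fe; rewrite tm (negPf fe) mul0r.
Qed.

Lemma Acomm_quad n E (src dst : 'I_E -> 'I_n) (mu : 'I_E -> R) (x : 'rV[R]_n) :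
  (x *m Lap src dst mu *m x^T) 0 0 =
  \sum_e (mu e * (x 0 (src e) - x 0 (dst e))) ^+ 2.
Proof.
rewrite /Lap /=.
set A := Acomm src dst mu.
have -> : x *m (A *m A^T) *m x^T = (x *m A) *m (x *m A)^T.
  by rewrite trmx_mul !mulmxA.
rewrite quad_row.
by apply: eq_bigr => e _; rewrite Acomm_entry.
Qed.

Section Aug.
Variables (n m E : nat) (src dst : 'I_E -> 'I_n) (mu : 'I_E -> R)
    (muv : 'I_n -> 'I_m -> R) (orient : 'I_n -> 'I_m -> bool).

Definition sgn i j : R := if orient i j then 1 else -1.

Lemma Aaug_entry (w : 'rV[R]_(n + n * m)) k :
  (w *m Aaug src dst mu muv orient) 0 k =
  \sum_e (cedge n m e == k)%:R * (mu e * (w 0 (ctr m (src e)) - w 0 (ctr m (dst e))))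
  + \sum_i \sum_j (vedge E i j == k)%:R *
        ((muv i j * sgn i j) * (w 0 (ctr m i) - w 0 (vrt i j))).
Proof.
rewrite /Aaug mulmxDr !mulmx_sumr mxE !summxE; congr (_ + _).
  by apply: eq_bigr => e _; rewrite tm.
apply: eq_bigr => i _; rewrite mulmx_sumr summxE.
by apply: eq_bigr => j _; rewrite tm.
Qed.

Lemma Aaug_c (w : 'rV[R]_(n + n * m)) e :
  (w *m Aaug src dst mu muv orient) 0 (cedge n m e) =
  mu e * (w 0 (ctr m (src e)) - w 0 (ctr m (dst e))).
Proof.
rewrite Aaug_entry (bigD1 e) //= eqxx mul1r big1 ?addr0.
  rewrite big1 ?addr0 // => i _; rewrite big1 // => j _.
  by rewrite /vedge /cedge eq_rlshift mul0r.
by move=> f fe; rewrite /cedge eq_lshift (negPf fe) mul0r.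
Qed.

Lemma Aaug_v (w : 'rV[R]_(n + n * m)) i j :
  (w *m Aaug src dst mu muv orient) 0 (vedge E i j) =
  (muv i j * sgn i j) * (w 0 (ctr m i) - w 0 (vrt i j)).
Proof.
rewrite Aaug_entry big1 ?add0r.
  rewrite (bigD1 i) //= (bigD1 j) //= eqxx mul1r big1 ?addr0.
    rewrite big1 ?addr0 // => i' i'i; rewrite big1 // => j' _.
    by rewrite /vedge eq_rshift eq_mxvec_index (negPf i'i) mul0r.
  by move=> j' j'j; rewrite /vedge eq_rshift eq_mxvec_index (negPf j'j) andbF mul0r.
by move=> e _; rewrite /vedge /cedge eq_lrshift mul0r.
Qed.

Lemma Aaug_quad (w : 'rV[R]_(n + n * m)) :
  let A := Aaug src dst mu muv orient in
  (w *m A *m (w *m A)^T) 0 0 =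
  \sum_e (mu e * (w 0 (ctr m (src e)) - w 0 (ctr m (dst e)))) ^+ 2
  + \sum_i \sum_j muv i j ^+ 2 * (w 0 (ctr m i) - w 0 (vrt i j)) ^+ 2.
Proof.
move=> A; rewrite quad_row big_split_ord /=; congr (_ + _).
  by apply: eq_bigr => e _; rewrite Aaug_c.
rewrite sum_mxvec; apply: eq_bigr => i _; apply: eq_bigr => j _.
have -> : rshift E (mxvec_index i j) = vedge E i j by [].
rewrite Aaug_v exprMn [X in X * _]exprMn /sgn.
by case: (orient i j); rewrite ?expr1n ?sqrrN ?expr1n mulr1.
Qed.

Lemma ones_Aaug : (const_mx 1 : 'rV[R]_(n + n * m)) *m Aaug src dst mu muv orient = 0.
Proof.
apply/rowP => k; rewrite Aaug_entry !mxE big1 ?add0r.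
  by rewrite big1 // => i _; rewrite big1 // => j _; rewrite !mxE subrr !mulr0.
by move=> e _; rewrite !mxE subrr !mulr0.
Qed.

End Aug.

Lemma ones_Acomm n E (src dst : 'I_E -> 'I_n) (mu : 'I_E -> R) :
  (const_mx 1 : 'rV[R]_n) *m Acomm src dst mu = 0.
Proof. by apply/rowP => e; rewrite Acomm_entry !mxE subrr mulr0. Qed.

End Mx.
Section Lapl.
Variable R : rcfType.

Lemma quad_ge0 p (z : 'rV[R]_p) : 0 <= (z *m z^T) 0 0.
Proof. by rewrite quad_row sumr_ge0 // => k _; rewrite sqr_ge0. Qed.

Lemma quad_gt0 p (z : 'rV[R]_p) : z != 0 -> 0 < (z *m z^T) 0 0.
Proof.
move=> z0; have [k zk] : exists k, z 0 k != 0.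
  apply/existsP; apply: contraR z0 => /existsPn H.
  by apply/eqP/rowP => k; rewrite mxE; apply/eqP; move: (H k); rewrite negbK.
rewrite quad_row (bigD1 k) //=.
have h1 : 0 < z 0 k ^+ 2 by rewrite exprn_even_gt0 //= zk orbT.
have h2 : 0 <= \sum_(i | i != k) z 0 i ^+ 2 by rewrite sumr_ge0 // => i _; rewrite sqr_ge0.
lra.
Qed.

Lemma psd_root p (M : 'M[R]_p) a : (forall v : 'rV[R]_p, 0 <= (v *m M *m v^T) 0 0) ->
  root (char_poly M) a -> 0 <= a.
Proof.
move=> psd /eig_vec [v vM v0].
have := psd v; rewrite vM -scalemxAl mxE => h.
have h2 := quad_gt0 v0.
by rewrite -(pmulr_lge0 _ h2).
Qed.

Variables (n E : nat) (src dst : 'I_E -> 'I_n) (mu : 'I_E -> R).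
Hypothesis mupos : forall e, 0 < mu e.
Hypothesis conn : connected_graph src dst.
Local Notation L := (Lap src dst mu).
Local Notation ell := (lmin_pos (Lap src dst mu)).

Lemma Lap_sym : L^T = L.
Proof. by rewrite /Lap /= trmx_mul trmxK. Qed.

Lemma Lap_psd (v : 'rV[R]_n) : 0 <= (v *m L *m v^T) 0 0.
Proof. by rewrite Acomm_quad sumr_ge0 // => e _; rewrite sqr_ge0. Qed.

Lemma Lap_ones : L *m (const_mx 1 : 'cV[R]_n) = 0.
Proof.
rewrite /Lap /= -mulmxA.
have -> : (Acomm src dst mu)^T *m (const_mx 1 : 'cV[R]_n)
          = ((const_mx 1 : 'rV[R]_n) *m Acomm src dst mu)^T.
  by rewrite trmx_mul trmx_const.
by rewrite ones_Acomm trmx0 mulmx0.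
Qed.

Lemma ell_ge0 : 0 <= ell.
Proof.
apply: lmin_ge0 => x; rewrite in_nz_eigs => /andP [_ r].
exact: psd_root Lap_psd r.
Qed.

Lemma Lap_ker (v : 'rV[R]_n) : v *m L = 0 -> forall k l, v 0 k = v 0 l.
Proof.
move=> vL.
have h0 : (v *m L *m v^T) 0 0 = 0 by rewrite vL mul0mx mxE.
rewrite Acomm_quad in h0.
have he e : v 0 (src e) = v 0 (dst e).
  have /psumr_eq0P H := h0.
  have := H (fun i _ => sqr_ge0 _) e isT.
  by move/eqP; rewrite sqrf_eq0 mulf_eq0 (gt_eqF (mupos e)) /= subr_eq0 => /eqP.
have hadj k l : adj src dst k l -> v 0 k = v 0 l.
  case/existsP => e /orP [/andP [/eqP <- /eqP <-]|/andP [/eqP <- /eqP <-]] //.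
move=> k l; move: (conn k l) => /connectP [p pth ->].
elim: p k pth => [|a p IH] k //= /andP [hka hp].
by rewrite (hadj _ _ hka) IH.
Qed.

End Lapl.
Section F1.
Variable R : rcfType.
Variables (n E : nat) (src dst : 'I_E -> 'I_n) (mu : 'I_E -> R).
Hypothesis mupos : forall e, 0 < mu e.
Hypothesis conn : connected_graph src dst.
Local Notation L := (Lap src dst mu).
Local Notation ell := (lmin_pos (Lap src dst mu)).

Lemma rowJ (v : 'rV[R]_n) :
  v *m (const_mx 1 : 'M[R]_n) = (\sum_k v 0 k) *: const_mx 1.
Proof. by apply/rowP => j; rewrite !mxE mulr1; apply: eq_bigr => k _; rewrite mxE mulr1. Qed.

Lemma sum_sqB (x : 'rV[R]_n) (c : R) :
  \sum_i (x 0 i - c) ^+ 2 = \sum_i x 0 i ^+ 2 - 2 * c * \sum_i x 0 i + n%:R * c ^+ 2.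
Proof.
have -> : \sum_i (x 0 i - c) ^+ 2 = \sum_i (x 0 i ^+ 2 - 2 * c * x 0 i + c ^+ 2).
  by apply: eq_bigr => i _; ring.
by rewrite big_split sumrB /= -mulr_sumr sum_ord_const.
Qed.

Lemma F1 (x : 'rV[R]_n) : (0 < n)%N ->
  ell * \sum_i (x 0 i - (\sum_j x 0 j) / n%:R) ^+ 2 <= (x *m L *m x^T) 0 0.
Proof.
move=> n0.
have nz : n%:R != 0 :> R by rewrite pnatr_eq0 -lt0n.
set l := ell.
set J := (const_mx 1 : 'M[R]_n).
set one := (const_mx 1 : 'cV[R]_n).
set N' := L - l%:M + (l / n%:R) *: J.
have sym : N'^T = N'.
  by rewrite /N' raddfD raddfB /= linearZ /= trmx_const tr_scalar_mx Lap_sym.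
have J1 : J *m one = n%:R *: one.
  apply/colP => i; rewrite !mxE (eq_bigr (fun _ => 1)) ?sum_ord_const // => j _.
  by rewrite !mxE mulr1.
have N1 : N' *m one = 0.
  rewrite /N' !mulmxDl mulNmx Lap_ones mul_scalar_mx -scalemxAl J1 scalerA divfK //.
  by rewrite sub0r addNr.
have eig_nn mu0 : root (char_poly N') mu0 -> 0 <= mu0.
  move=> /eig_vec [v vN v0].
  set s := \sum_k v 0 k.
  have key : mu0 * s = 0.
    have := congr1 (fun M => (M *m one) 0 0) vN.
    rewrite /= -mulmxA N1 mulmx0 -scalemxAl !mxE => /esym <-.
    by congr (_ * _); apply: eq_bigr => k _; rewrite ?mxE ?mulr1.
  have [->|mu_nz] := eqVneq mu0 0; first by [].
  have s0 : s = 0 by move/eqP: key; rewrite mulf_eq0 (negPf mu_nz) => /eqP.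
  have vL : v *m L = (mu0 + l) *: v.
    move: vN; rewrite /N' mulmxDr mulmxBr mul_mx_scalar -scalemxAr rowJ -/s s0.
    by rewrite scale0r scaler0 addr0 scalerDl => /eqP; rewrite subr_eq => /eqP.
  have [ml0|ml_nz] := eqVneq (mu0 + l) 0.
    exfalso; move: v0; apply/negP; rewrite negbK.
    rewrite ml0 scale0r in vL.
    have hc := Lap_ker mupos conn vL.
    pose k0 := Ordinal n0.
    have sE : s = n%:R * v 0 k0.
      by rewrite /s (eq_bigr (fun _ => v 0 k0)) ?sum_ord_const // => k _; apply: hc.
    have : v 0 k0 = 0 by move: s0; rewrite sE => /eqP; rewrite mulf_eq0 (negPf nz) => /eqP.
    by move=> h; apply/eqP/rowP => k; rewrite mxE (hc k k0) h.
  have inL : mu0 + l \in nonzero_eigs L.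
    rewrite in_nz_eigs ml_nz /= -eigenvalue_root_char; apply/eigenvalueP.
    by exists v.
  have := lmin_le inL; rewrite -/l; lra.
have [d [z [hd [hz [hsum hq]]]]] := spec_quad x sym.
have qge : 0 <= (x *m N' *m x^T) 0 0.
  by rewrite hq sumr_ge0 // => i _; rewrite mulr_ge0 // eig_nn.
set XL := (x *m L *m x^T) 0 0.
move: qge; rewrite /N' mulmxDr mulmxBr mul_mx_scalar -scalemxAr rowJ.
rewrite !mulmxDl mulNmx -!scalemxAl !mxE.
rewrite sum_sqB.
rewrite [X in _ * (_ * X)](eq_bigr (fun j => x 0 j)); last first.
  by move=> j _; rewrite !mxE mul1r.
rewrite [X in _ - l * X](eq_bigr (fun j => x 0 j ^+ 2)); last first.
  by move=> j _; rewrite !mxE expr2.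
rewrite (_ : \sum_j (x *m L) 0 j * x^T j 0 = XL); last by rewrite /XL mxE.
set S := \sum_j x 0 j.
set Q2 := \sum_i x 0 i ^+ 2.
have -> : l * (Q2 - 2 * (S / n%:R) * S + n%:R * (S / n%:R) ^+ 2) = l * Q2 - l / n%:R * S * S.
  by field.
lra.
Qed.

End F1.
Section Arith.
Variable R : rcfType.

Lemma wsum_shift p (g w : 'I_p -> R) t :
  \sum_k g k * w k = 0 -> (forall k, 0 <= g k) ->
  \sum_k g k * w k ^+ 2 <= \sum_k g k * (w k - t) ^+ 2.
Proof.
move=> h0 gpos.
have -> : \sum_k g k * (w k - t) ^+ 2 =
   \sum_k g k * w k ^+ 2 - 2 * t * \sum_k g k * w k + t ^+ 2 * \sum_k g k.
  rewrite !mulr_sumr -!sumrB -big_split /=; apply: eq_bigr => k _; ring.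
rewrite h0 mulr0 subr0 lerDl mulr_ge0 ?sqr_ge0 //.
by rewrite sumr_ge0.
Qed.

Lemma per_i m (ell sigma kap si Ki xi t : R) (y Lj : 'I_m -> R) :
  0 <= ell -> 0 < si -> si <= sigma -> Ki = 1 + si^-1 * \sum_j Lj j -> Ki <= kap ->
  (forall j, 0 < Lj j) ->
  ell / (2 * sigma * kap) * (si * (xi - t) ^+ 2 + \sum_j Lj j * (y j - t) ^+ 2)
  <= ell * (xi - t) ^+ 2 + \sum_j (ell / (sigma * Ki) * Lj j) * (xi - y j) ^+ 2.
Proof.
move=> ell0 si0 sis Kdef Kk Lpos.
have sig0 : 0 < sigma by apply: lt_le_trans sis.
set SL := \sum_j Lj j.
have SL0 : 0 <= SL by rewrite sumr_ge0 // => j _; apply/ltW.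
have K1 : 1 <= Ki by rewrite Kdef lerDl mulr_ge0 // invr_ge0 ltW.
have Ki0 : 0 < Ki by apply: lt_le_trans K1.
have kap0 : 0 < kap by apply: lt_le_trans Kk.
have KiE : si * Ki = si + SL by rewrite Kdef mulrDr mulr1 mulrA mulfV ?mul1r // gt_eqF.
set a := (xi - t) ^+ 2.
set SLb := \sum_j Lj j * (xi - y j) ^+ 2.
set SLy := \sum_j Lj j * (y j - t) ^+ 2.
have a0 : 0 <= a by rewrite sqr_ge0.
have SLb0 : 0 <= SLb by rewrite sumr_ge0 // => j _; rewrite mulr_ge0 ?sqr_ge0 // ltW.
have hy : SLy <= 2 * a * SL + 2 * SLb.
  rewrite /SLy /SL /SLb !mulr_sumr -big_split /=; apply: ler_sum => j _.
  have Lj0 := Lpos j.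
  have : (y j - t) ^+ 2 <= 2 * a + 2 * (xi - y j) ^+ 2.
    rewrite /a; have := sqr_ge0 (xi - t + (xi - y j)); nra.
  nra.
have -> : \sum_j ell / (sigma * Ki) * Lj j * (xi - y j) ^+ 2 = ell / (sigma * Ki) * SLb.
  by rewrite /SLb mulr_sumr; apply: eq_bigr => j _; rewrite mulrA.
set p := ell / (2 * sigma * kap).
set q := ell / (sigma * Ki).
have p0 : 0 <= p by rewrite /p divr_ge0 // !mulr_ge0 // ltW.
have h1 : p * (2 * sigma * kap) = ell by rewrite /p mulfVK // !mulf_neq0 // gt_eqF.
have h2 : 2 * p <= q.
  have -> : 2 * p = ell / (sigma * kap).
    by rewrite /p; field; rewrite !gt_eqF.
  rewrite /q ler_wpM2l // lef_pV2 ?posrE ?mulr_gt0 //.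
  by rewrite ler_wpM2l // ltW.
have hs : si + 2 * SL <= 2 * sigma * kap.
  have : si * Ki <= sigma * kap by rewrite ler_pM // ltW.
  nra.
have e1 : p * SLy <= p * (2 * a * SL + 2 * SLb) by rewrite ler_wpM2l.
have e2 : p * a * (si + 2 * SL) <= p * a * (2 * sigma * kap).
  by rewrite ler_wpM2l // mulr_ge0.
have e3 : 2 * p * SLb <= q * SLb by rewrite ler_wpM2r.
nra.
Qed.

End Arith.
Section Main.
Variable R : rcfType.
Variables (n m E : nat) (src dst : 'I_E -> 'I_n) (mu : 'I_E -> R)
    (muv : 'I_n -> 'I_m -> R) (orient : 'I_n -> 'I_m -> bool)
    (sig : 'I_n -> R) (Lij : 'I_n -> 'I_m -> R).
Hypothesis sigpos : forall i, 0 < sig i.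
Hypothesis Lpos : forall i j, 0 < Lij i j.

Local Notation A := (Aaug src dst mu muv orient).
Local Notation M := (Ltilde src dst mu muv orient sig Lij).
Local Notation S := (Sig_isqrt sig Lij).
Local Notation g k := (sigdiag sig Lij 0 k).

Lemma g_ctr i : g (ctr m i) = sig i.
Proof. by rewrite /sigdiag /ctr row_mxEl mxE. Qed.

Lemma g_vrt i j : g (vrt i j) = Lij i j.
Proof. by rewrite /sigdiag /vrt row_mxEr mxvecE mxE. Qed.

Lemma sum_split (F : 'I_(n + n * m) -> R) :
  \sum_k F k = \sum_i (F (ctr m i) + \sum_j F (vrt i j)).
Proof. by rewrite big_split_ord sum_mxvec big_split. Qed.

Lemma g_pos k : 0 < g k.
Proof.
rewrite -(splitK k); case: (fintype.split k) => [i|t] /=.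
  by have := g_ctr i; rewrite /ctr => ->.
case/mxvec_indexP: t => i j.
by have := g_vrt i j; rewrite /vrt => ->.
Qed.

Lemma vS_entry (v : 'rV[R]_(n + n * m)) k : (v *m S) 0 k = v 0 k / Num.sqrt (g k).
Proof. by rewrite /Sig_isqrt; set sd := sigdiag sig Lij; rewrite mul_mx_diag !mxE. Qed.

Lemma M_sym : M^T = M.
Proof. by rewrite /Ltilde /= !trmx_mul /Sig_isqrt tr_diag_mx trmxK !mulmxA. Qed.

Lemma M_quad (v : 'rV[R]_(n + n * m)) :
  (v *m M *m v^T) 0 0 = (v *m S *m A *m (v *m S *m A)^T) 0 0.
Proof.
by rewrite /Ltilde /= !trmx_mul /Sig_isqrt tr_diag_mx !mulmxA.
Qed.

Lemma M_ones (v : 'rV[R]_(n + n * m)) :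
  v *m M *m (\col_k Num.sqrt (g k)) = 0.
Proof.
have S1 : S *m (\col_k Num.sqrt (g k)) = const_mx 1.
  apply/colP => k; rewrite /Sig_isqrt; set sd := sigdiag sig Lij.
  rewrite mul_diag_mx mxE [X in X * _]mxE [X in _ * X]mxE [RHS]mxE mulVf //.
  by rewrite gt_eqF // sqrtr_gt0 /sd g_pos.
have A1 : A^T *m (const_mx 1 : 'cV[R]_(n + n * m)) = 0.
  by rewrite -trmx_const -trmx_mul ones_Aaug trmx0.
rewrite /Ltilde /= -!mulmxA S1.
by rewrite A1 !mulmx0.
Qed.


Variables (sigma kap : R).
Hypothesis mupos : forall e, 0 < mu e.
Hypothesis conn : connected_graph src dst.
Hypothesis sigle : forall i, sig i <= sigma.
Hypothesis kaple : forall i, kappa sig Lij i <= kap.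
Hypothesis muvE : forall i j, muv i j ^+ 2 =
     lmin_pos (Lap src dst mu) / (sigma * kappa sig Lij i) * Lij i j.
Local Notation ell := (lmin_pos (Lap src dst mu)).
Local Notation L := (Lap src dst mu).

Lemma main_bound lam : lam \in nonzero_eigs M -> ell / (2 * sigma * kap) <= lam.
Proof.
rewrite in_nz_eigs => /andP [lam0 /eig_vec [v vM v0]].
have n0 : (0 < n)%N.
  rewrite lt0n; apply/negP => /eqP n0; move/negP: v0; apply; apply/eqP/rowP => k.
  have H : (n + n * m = 0)%N by rewrite n0.
  by have := ltn_ord k; rewrite [X in (_ < X)%N -> _]H.
set w := v *m S.
have wE k : w 0 k = v 0 k / Num.sqrt (g k) by exact: vS_entry.
have sq k : Num.sqrt (g k) ^+ 2 = g k by rewrite sqr_sqrtr // ltW // g_pos.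
have sqnz k : Num.sqrt (g k) != 0 by rewrite gt_eqF // sqrtr_gt0 g_pos.
have ha : lam * \sum_k v 0 k ^+ 2 = (w *m A *m (w *m A)^T) 0 0.
  by rewrite -M_quad vM -scalemxAl mxE quad_row.
have hc : \sum_k v 0 k ^+ 2 = \sum_k g k * w 0 k ^+ 2.
  by apply: eq_bigr => k _; rewrite wE expr_div_n sq mulrC divfK // gt_eqF // g_pos.
have hb : \sum_k g k * w 0 k = 0.
  have := congr1 (fun X : 'M[R]_1 => X 0 0) (M_ones v).
  rewrite vM -scalemxAl mxE [X in _ * X]mxE [RHS]mxE => /eqP.
  rewrite mulf_eq0 (negPf lam0) /= => /eqP H; apply: etrans _ H.
  apply: eq_bigr => k' _; rewrite wE [in RHS]mxE -{1}(sq k'); by field; rewrite ?sqnz.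
have i0 : 'I_n := Ordinal n0.
have sigma0 : 0 < sigma by apply: lt_le_trans (sigle i0).
have kappa1 i : 1 <= kappa sig Lij i.
  rewrite /kappa lerDl mulr_ge0 //; first by rewrite invr_ge0 ltW.
  by rewrite sumr_ge0 // => j _; apply/ltW.
have kap0 : 0 < kap by apply: lt_le_trans (le_trans (kappa1 i0) (kaple i0)).
have ell0 : 0 <= ell := ell_ge0 src dst mu.
set c := ell / (2 * sigma * kap).
have c0 : 0 <= c by rewrite /c divr_ge0 // !mulr_ge0 // ltW.
set xr := (\row_i w 0 (ctr m i) : 'rV[R]_n).
set t := (\sum_j xr 0 j) / n%:R.
have hF := F1 mupos conn xr n0.
have key : c * \sum_k g k * (w 0 k - t) ^+ 2 <= (w *m A *m (w *m A)^T) 0 0.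
  rewrite Aaug_quad.
  have -> : \sum_e (mu e * (w 0 (ctr m (src e)) - w 0 (ctr m (dst e)))) ^+ 2
            = (xr *m L *m xr^T) 0 0.
    by rewrite Acomm_quad; apply: eq_bigr => e _; rewrite !mxE.
  apply: le_trans (_ : \sum_i (ell * (xr 0 i - t) ^+ 2 +
       \sum_j muv i j ^+ 2 * (w 0 (ctr m i) - w 0 (vrt i j)) ^+ 2) <= _); last first.
    by rewrite big_split /= -mulr_sumr lerD2r.
  rewrite sum_split mulr_sumr; apply: ler_sum => i _.
  rewrite g_ctr (eq_bigr (fun j => Lij i j * (w 0 (vrt i j) - t) ^+ 2)); last first.
    by move=> j _; rewrite g_vrt.
  rewrite [X in _ <= _ + X](eq_bigr (fun j => ell / (sigma * kappa sig Lij i) * Lij i j *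
             (w 0 (ctr m i) - w 0 (vrt i j)) ^+ 2)); last first.
    by move=> j _; rewrite muvE.
  rewrite [xr 0 i]mxE.
  apply: (@per_i R m ell sigma kap (sig i) (kappa sig Lij i) (w 0 (ctr m i)) t
             (fun j => w 0 (vrt i j)) (Lij i)) => //.
have hs := @wsum_shift R _ (fun k => g k) (fun k => w 0 k) t hb (fun k => ltW (g_pos k)).
have pos : 0 < \sum_k v 0 k ^+ 2 by rewrite -quad_row quad_gt0.
rewrite -(ler_pM2r pos) ha.
apply: le_trans key; rewrite hc; apply: ler_wpM2l => //.
Qed.

Hypothesis simple : simple_graph src dst.

Lemma empty_case : nonzero_eigs M = [::] -> ell = 0.
Proof.
move=> Mnil; apply/eqP; rewrite eq_le (ell_ge0 src dst mu) andbT leNgt.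
apply/negP => ellpos.
have [x xin] : exists x, x \in nonzero_eigs L.
  move: ellpos; rewrite /lmin_pos; case: (nonzero_eigs L) => [|a s]; first by rewrite ltxx.
  by move=> _; exists a; rewrite mem_head.
move: xin; rewrite in_nz_eigs => /andP [x0 /eig_vec [u uL u0]].
have hq : (u *m L *m u^T) 0 0 != 0.
  by rewrite uL -scalemxAl mxE mulf_neq0 // gt_eqF // quad_gt0.
rewrite Acomm_quad in hq.
have [e _] : exists e : 'I_E, true.
  case: (pickP (fun _ : 'I_E => true)) => [e _|H]; first by exists e.
  by move: hq; rewrite big1 ?eqxx // => e; have := H e.
set z := (delta_mx 0 (ctr m (src e)) : 'rV[R]_(n + n * m)).
have hz0 : (z *m M *m z^T) 0 0 = 0.
  have [d [zz [hd [hz [_ hq']]]]] := spec_quad z M_sym.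
  rewrite hq' big1 // => i _.
  have -> : d i = 0.
    apply/eqP; apply: contraT => dnz.
    have : d i \in nonzero_eigs M by rewrite in_nz_eigs dnz hd.
    by rewrite Mnil.
  by rewrite mul0r.
have hzpos : 0 < (z *m M *m z^T) 0 0.
  rewrite M_quad Aaug_quad.
  set w := z *m S.
  have wsrc : w 0 (ctr m (src e)) != 0.
    rewrite /w vS_entry /z mxE !eqxx /= mul1r invr_eq0 gt_eqF //.
    by rewrite sqrtr_gt0 g_pos.
  have wdst : w 0 (ctr m (dst e)) = 0.
    rewrite /w vS_entry /z mxE /ctr eq_lshift eq_sym.
    by case: simple => /(_ e) /negPf -> _; rewrite andbF /= mul0r.
  have t0 : 0 < (mu e * (w 0 (ctr m (src e)) - w 0 (ctr m (dst e)))) ^+ 2.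
    rewrite exprn_even_gt0 //= mulf_eq0 negb_or (gt_eqF (mupos e)) /=.
    by rewrite wdst subr0.
  have r1 : 0 <= \sum_(f | f != e) (mu f * (w 0 (ctr m (src f)) - w 0 (ctr m (dst f)))) ^+ 2.
    by rewrite sumr_ge0 // => f _; rewrite sqr_ge0.
  have r2 : 0 <= \sum_i \sum_j muv i j ^+ 2 * (w 0 (ctr m i) - w 0 (vrt i j)) ^+ 2.
    by rewrite sumr_ge0 // => i _; rewrite sumr_ge0 // => j _; rewrite mulr_ge0 ?sqr_ge0.
  rewrite (bigD1 e) //=; lra.
by move: hzpos; rewrite hz0 ltxx.
Qed.

End Main.

Theorem lemma5 (R : rcfType) (n m E : nat)
    (src dst : 'I_E -> 'I_n) (mu : 'I_E -> R)
    (muv : 'I_n -> 'I_m -> R) (orient : 'I_n -> 'I_m -> bool)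
    (sig : 'I_n -> R) (Lij : 'I_n -> 'I_m -> R) (sigma kap : R) :
  simple_graph src dst ->
  connected_graph src dst ->
  (forall e, 0 < mu e) ->
  (forall i, 0 < sig i) ->
  (forall i j, 0 < Lij i j) ->
  (forall i j, 0 < muv i j) ->
  (forall i, sig i <= sigma) ->
  (forall i, kappa sig Lij i <= kap) ->
  (forall i j, muv i j ^+ 2 =
     lmin_pos (Lap src dst mu) / (sigma * kappa sig Lij i) * Lij i j) ->
  lmin_pos (Ltilde src dst mu muv orient sig Lij)
    >= lmin_pos (Lap src dst mu) / (2 * sigma * kap).
Proof.
move=> simple conn mupos sigpos Lpos muvpos sigle kaple muvE.
have [Hnil|Hnn] := eqVneq (nonzero_eigs (Ltilde src dst mu muv orient sig Lij)) [::].
  rewrite (empty_case sigpos Lpos mupos simple Hnil) (lmin_nil Hnil) mul0r.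
  by [].
apply: lmin_ge => // x hx.
exact: (main_bound sigpos Lpos mupos conn sigle kaple muvE hx).
Qed.
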